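(* For $\kappa>0$ and $0\le\rho<1$ define $$C_s^{\lim}(\kappa,\rho)=\log(1+\kappa)+\log\!\left(\frac12+\sqrt{\frac14-\frac{\rho\kappa}{(1+\kappa)^2}}\right).$$ Then for all such $\kappa$ and $\rho$, $$(1-\rho)\,C_s^{\lim}(\kappa,0)\le C_s^{\lim}(\kappa,\rho)\le C_s^{\lim}(\kappa,0).$$
   Context: $C_s^{\lim}(\kappa,\rho)$ is the high-SNR limit of the ergodic secrecy capacity of a correlated Rayleigh fading wiretap channel with average channel gain ratio $\kappa=\mathbb{E}[H_M]/\mathbb{E}[H_E]$ and power correlation coefficient $\rho$ between the main and eavesdropper channel power gains; note $C_s^{\lim}(\kappa,0)=\log(1+\kappa)$. *)

(* Defs.v *)
From Stdlib Require Import Reals.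
Open Scope R_scope.

Definition Cs_lim (kappa rho : R) : R :=
  ln (1 + kappa) + ln (1/2 + sqrt (1/4 - rho * kappa / (1 + kappa)^2)).

(* Main.v *)
Require Import Defs.
From Stdlib Require Import Reals Lra Psatz.
Open Scope R_scope.

Lemma lnle (x y : R) : 0 < x -> x <= y -> ln x <= ln y.
Proof. intros Hx Hxy. destruct (Rle_lt_or_eq_dec _ _ Hxy) as [H|H].
  left; apply ln_increasing; lra. subst; lra. Qed.

Lemma ln_tan (y z : R) : 0 < y -> 0 < z -> ln y <= ln z + y / z - 1.
Proof. intros Hy Hz.
  assert (Hq : 0 < y / z) by (apply Rdiv_lt_0_compat; lra).
  pose proof (exp_ineq1_le (ln (y / z))) as H. rewrite exp_ln in H by lra.
  unfold Rdiv in *. rewrite ln_mult in H by (try apply Rinv_0_lt_compat; lra).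
  rewrite ln_Rinv in H by lra. lra. Qed.

Theorem corollary1 (kappa rho : R) (hk : 0 < kappa) (hr0 : 0 <= rho) (hr1 : rho < 1) :
  (1 - rho) * Cs_lim kappa 0 <= Cs_lim kappa rho /\ Cs_lim kappa rho <= Cs_lim kappa 0.
Proof.
  set (a := 1 + kappa). set (b := / a).
  assert (Ha : 1 < a) by (unfold a; lra).
  assert (Hb0 : 0 < b) by (unfold b; apply Rinv_0_lt_compat; lra).
  assert (Hab : a * b = 1) by (unfold b; field; lra).
  assert (Hb1 : b < 1) by nra.
  assert (HC0 : Cs_lim kappa 0 = ln a).
  { unfold Cs_lim. fold a. replace (1/4 - 0 * kappa / a ^ 2) with ((1/2)*(1/2)) by (field; lra).
    rewrite sqrt_square by lra. replace (1/2+1/2) with 1 by lra. rewrite ln_1; lra. }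
  rewrite HC0. unfold Cs_lim. fold a.
  set (D := 1/4 - rho * kappa / a ^ 2).
  assert (HD : D = 1/4 - rho * (b - b*b)).
  { unfold D, b. assert (Hk : kappa = a - 1) by (unfold a; lra). rewrite Hk. field; lra. }
  assert (HD0 : 0 <= D) by (rewrite HD; assert (b - b*b <= 1/4) by (pose proof (pow2_ge_0 (b-1/2)); nra); assert (0 <= b - b*b) by nra; nra).
  pose proof (sqrt_pos D) as Hs0. pose proof (sqrt_sqrt D HD0) as Hss.
  set (s := sqrt D) in *.
  assert (Hs12 : s <= 1/2) by (rewrite HD in Hss; assert (0 <= b - b*b) by nra; nra).
  assert (Hlna : 0 < ln a) by (rewrite <- ln_1; apply ln_increasing; lra).
  split.
  - set (m := 1 - rho + rho * b).
    assert (Hm0 : 0 < m) by (unfold m; nra).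
    assert (Hxm : m <= 1/2 + s).
    { destruct (Rle_or_lt (1/2 - rho + rho*b) 0) as [Hr|Hr]. unfold m; lra.
      assert (s * s >= (1/2 - rho + rho*b)^2) by (rewrite Hss, HD; assert (0 <= rho*(1-rho)*((1-b)*(1-b))) by (apply Rmult_le_pos; [nra| nra]); nra).
      unfold m; nra. }
    pose proof (lnle _ _ Hm0 Hxm).
    pose proof (ln_tan b m Hb0 Hm0). pose proof (ln_tan 1 m ltac:(lra) Hm0).
    rewrite ln_1 in *.
    assert (Hlb : ln b = - ln a) by (unfold b; apply ln_Rinv; lra).
    assert (rho * (b / m - 1) + (1 - rho) * (1 / m - 1) = 0) by (unfold m in *; field; lra).
    nra.
  - assert (ln (1/2 + s) <= 0) by (rewrite <- ln_1; apply lnle; lra). lra.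
Qed.
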